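(* Let $d\ge2$, $q\ge2$ even, $\boldsymbol\theta\in\mathbb{R}^d$, and let $\mathbf a_1,\mathbf a_2\in\mathbb{R}^d$ be linearly independent. Then for every symmetric positive definite $d\times d$ matrix $\mathrm Q$, the (constant) vector $\nabla(\nabla^\top\mathrm Q\nabla)^{q/2}\big[(\mathbf a_1^\top(\mathbf x-\boldsymbol\theta))^q(\mathbf a_2^\top(\mathbf x-\boldsymbol\theta))\big]$ is non-zero.
   Context: $\nabla$ is the gradient with respect to $\mathbf x\in\mathbb{R}^d$; $(\nabla^\top\mathrm Q\nabla)^{q/2}$ is the $q/2$-fold application of the second-order differential operator $\nabla^\top\mathrm Q\nabla$. *)

(* Defs.v *)
(* real field R : realType (mathcomp-analysis reals),
   multivariate polynomials from multinomials; derivatives are formal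
   partial derivatives of polynomials (mderiv), which coincide with the
   analytic ones on polynomial functions. *)
From HB Require Import structures.
From mathcomp Require Import all_boot all_order all_algebra.
From mathcomp Require Import reals.
From mathcomp Require Import mpoly.
Set Implicit Arguments. Unset Strict Implicit. Unset Printing Implicit Defensive.
Import Order.TTheory GRing.Theory Num.Theory.
Local Open Scope ring_scope.

Definition sym_posdef (R : realFieldType) (d : nat) (Q : 'M[R]_d) : Prop :=
  Q^T = Q /\ forall v : 'rV[R]_d, v != 0 -> 0 < (v *m Q *m v^T) 0 0.

Definition lin_form (R : realFieldType) (d : nat) (a theta : 'rV[R]_d)
  : {mpoly R[d]} :=
  \sum_(i < d) a 0 i *: ('X_i - (theta 0 i)%:MP).

Definition QLap (R : realFieldType) (d : nat) (Q : 'M[R]_d)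
  (p : {mpoly R[d]}) : {mpoly R[d]} :=
  \sum_(i < d) \sum_(j < d) Q i j *: mderiv i (mderiv j p).

Definition mgrad (R : realFieldType) (d : nat) (p : {mpoly R[d]})
  : 'rV[{mpoly R[d]}]_d :=
  \row_(i < d) mderiv i p.

(* Main.v *)
Require Import Defs.
From HB Require Import structures.
From mathcomp Require Import all_boot all_order all_algebra.
From mathcomp Require Import reals.
From mathcomp Require Import mpoly.
From mathcomp Require Import ring.
Import Order.TTheory GRing.Theory Num.Theory.
Local Open Scope ring_scope.

Section S.
Variables (R : realFieldType) (d : nat).
Implicit Types (L : {mpoly R[d]}).

Lemma dX (i j : 'I_d) : mderiv i ('X_j : {mpoly R[d]}) = if j == i then 1 else 0.
Proof.
rewrite mderivX mnm1E; case: eqP => [->|_]; last by rewrite scale0r.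
have -> : (U_(i) - U_(i) = 0)%MM by apply/mnmP => k; rewrite mnmBE mnm0E subnn.
by rewrite mpolyX0 scale1r.
Qed.

Lemma dlin (a theta : 'rV[R]_d) i : mderiv i (lin_form a theta) = (a 0 i)%:MP.
Proof.
rewrite /lin_form raddf_sum /=.
rewrite (bigD1 i) //= big1 ?addr0.
  by rewrite mderivZ mderivB mderivC subr0 dX eqxx -mul_mpolyC mulr1.
move=> j /negPf ji; by rewrite mderivZ mderivB mderivC subr0 dX ji scaler0.
Qed.

Variables (L1 L2 : {mpoly R[d]}) (c1 c2 : 'I_d -> R).
Hypotheses (h1 : forall i, mderiv i L1 = (c1 i)%:MP) (h2 : forall i, mderiv i L2 = (c2 i)%:MP).

Lemma dpow i m : mderiv i (L1 ^+ m.+1) = (m.+1%:R * c1 i)%:MP * L1 ^+ m.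
Proof.
elim: m => [|m IH]; first by rewrite expr1 h1 expr0 mulr1 mul1r.
rewrite exprS mderivM IH h1 exprS. ring.
Qed.

Lemma dprod i n : mderiv i (L1 ^+ n.+1 * L2) =
  (n.+1%:R * c1 i)%:MP * (L1 ^+ n * L2) + (c2 i)%:MP * L1 ^+ n.+1.
Proof. rewrite mderivM dpow h2. ring. Qed.

Lemma dd i j m A B : mderiv i (mderiv j (A%:MP * (L1 ^+ m.+2 * L2) + B%:MP * L1 ^+ m.+3))
  = (A * (m.+2%:R * c1 j) * (m.+1%:R * c1 i))%:MP * (L1 ^+ m * L2)
  + (A * ((m.+2%:R * c1 j) * c2 i + c2 j * (m.+2%:R * c1 i)) + B * ((m.+3%:R * c1 j) * (m.+2%:R * c1 i)))%:MP * L1 ^+ m.+1.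
Proof.
rewrite mderivD !mderiv_mulC (dprod j m.+1) (dpow j m.+2) !(mderivD, mderiv_mulC) (dprod i m) (dpow i m.+1).
ring.
Qed.

Variable (Q : 'M[R]_d).
Definition alpha := \sum_(i < d) \sum_(j < d) Q i j * (c1 i * c1 j).

Lemma collect (F G : 'I_d -> 'I_d -> R) (X Y : {mpoly R[d]}) :
  \sum_(i < d) \sum_(j < d) Q i j *: ((F i j)%:MP * X + (G i j)%:MP * Y) =
  (\sum_(i < d) \sum_(j < d) Q i j * F i j)%:MP * X +
  (\sum_(i < d) \sum_(j < d) Q i j * G i j)%:MP * Y.
Proof.
rewrite !rmorph_sum !mulr_suml -big_split; apply eq_bigr => i _ /=.
rewrite !rmorph_sum !mulr_suml -big_split; apply eq_bigr => j _ /=.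
rewrite -mul_mpolyC. ring.
Qed.

Lemma step m (A B : R) : A != 0 -> alpha != 0 -> exists A' B', A' != 0 /\
  QLap Q (A%:MP * (L1 ^+ m.+2 * L2) + B%:MP * L1 ^+ m.+3) =
  A'%:MP * (L1 ^+ m * L2) + B'%:MP * L1 ^+ m.+1.
Proof.
move=> A0 al0; rewrite /QLap.
under eq_bigr do under eq_bigr do rewrite dd.
rewrite collect; eexists; eexists; split; last reflexivity.
have -> : \sum_(i < d) \sum_(j < d) Q i j * (A * (m.+2%:R * c1 j) * (m.+1%:R * c1 i))
  = (A * m.+2%:R * m.+1%:R) * alpha.
  rewrite /alpha mulr_sumr; apply eq_bigr => i _; rewrite mulr_sumr; apply eq_bigr => j _.
  ring.
by rewrite !mulf_neq0 // pnatr_eq0.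
Qed.

Lemma iter_step k : forall n (A B : R), A != 0 -> alpha != 0 -> exists A' B', A' != 0 /\
  iter k (QLap Q) (A%:MP * (L1 ^+ (n + 2 * k) * L2) + B%:MP * L1 ^+ (n + 2 * k).+1) =
  A'%:MP * (L1 ^+ n * L2) + B'%:MP * L1 ^+ n.+1.
Proof.
elim: k => [|k IH] n A B A0 al0.
  by exists A, B; rewrite addn0.
have e : (n + 2 * k.+1 = (n + 2 * k).+2)%N by rewrite mulnS addnCA add2n.
rewrite iterSr e.
have [A1 [B1 [A10 ->]]] := @step (n + 2 * k) A B A0 al0.
exact: IH.
Qed.
End S.

Theorem lemmaD2 (R : realType) (d q : nat) (theta a1 a2 : 'rV[R]_d)
  (Q : 'M[R]_d) :
  (2 <= d)%N -> (2 <= q)%N -> ~~ odd q ->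
  free [:: a1; a2] ->
  sym_posdef Q ->
  mgrad (iter (q %/ 2) (QLap Q)
           (lin_form a1 theta ^+ q * lin_form a2 theta)) != 0.
Proof.
move=> _ _ ev fr [_ pd].
have hq : q = (0 + 2 * (q %/ 2))%N by rewrite add0n mulnC divnK // dvdn2.
move: fr; rewrite free_cons seq1_free span_seq1 => /andP [n1 n2].
have a10 : a1 != 0 by apply: contraNneq n1 => ->; exact: mem0v.
set L1 := lin_form a1 theta; set L2 := lin_form a2 theta.
have h1 : forall i, mderiv i L1 = (a1 0 i)%:MP by move=> i; exact: dlin.
have h2 : forall i, mderiv i L2 = (a2 0 i)%:MP by move=> i; exact: dlin.
have al0 : @alpha R d (fun i => a1 0 i) Q != 0.
  rewrite /alpha.
  have -> : \sum_(i < d) \sum_(j < d) Q i j * (a1 0 i * a1 0 j) = (a1 *m Q *m a1^T) 0 0.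
    rewrite !mxE; under [RHS]eq_bigr do rewrite !mxE mulr_suml.
    rewrite exchange_big; apply eq_bigr => i _; apply eq_bigr => j _; ring.
  by apply/lt0r_neq0/pd.
have e : L1 ^+ q * L2 = 1%:MP * (L1 ^+ (0 + 2 * (q %/ 2)) * L2) + 0%:MP * L1 ^+ (0 + 2 * (q %/ 2)).+1.
  by rewrite -hq mpolyC1 mpolyC0 mul1r mul0r addr0.
rewrite e.
have [A [B [A0 ->]]] := @iter_step R d L1 L2 (fun i => a1 0 i) (fun i => a2 0 i) h1 h2 Q (q %/ 2) 0 1 0 (oner_neq0 R) al0.
apply/eqP => /matrixP H.
have hv : A *: a2 + B *: a1 = 0.
  apply/matrixP => z i; have := H 0 i; rewrite !mxE ord1.
  rewrite expr0 mul1r expr1 mderivD !mderiv_mulC h1 h2 -!rmorphM -rmorphD /=.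
  by move/eqP; rewrite mpolyC_eq0 => /eqP.
have [B0|B0] := eqVneq B 0.
  move: hv; rewrite B0 scale0r addr0 => /eqP; rewrite scaler_eq0 (negPf A0) (negPf n2) //.
move/negP: n1; apply; apply/vlineP; exists (- (A / B)).
apply: (scalerI B0); rewrite scalerA mulrN mulrCA divff // mulr1 scaleNr.
by move: hv; rewrite addrC => /eqP; rewrite addr_eq0 => /eqP.
Qed.
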